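(* Let $(X,d)$ be a metric space, let $\sigma$ and $\tau$ be conical bicombings on $X$, and let $n\ge1$ be an integer. For $x,y\in X$ set $c_{xy}(n;0):=x$, $c_{xy}(n;n):=y$ and \[ c_{xy}(n;i):=\sigma\big(\tau_{xy}(\tfrac{i-1}{n}),\tau_{xy}(\tfrac{i+1}{n}),\tfrac12\big)\quad(1\le i\le n-1), \] and define $c_\sigma(n;\tau)\colon X\times X\times[0,1]\to X$ by \[ c_\sigma(n;\tau)\big(x,y,(1-\lambda)\tfrac{i}{n}+\lambda\tfrac{i+1}{n}\big):=\sigma\big(c_{xy}(n;i),c_{xy}(n;i+1),\lambda\big) \] for $0\le i\le n-1$, $\lambda\in[0,1]$. Then $c_\sigma(n;\tau)$ is a conical bicombing on $X$. Moreover, if $\sigma$ is consistent, then $c_\sigma(n;\sigma)=\sigma$.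
   Context: A bicombing on $(X,d)$ is a map $\sigma\colon X\times X\times[0,1]\to X$ such that each $\sigma_{xy}:=\sigma(x,y,\cdot)$ is a geodesic from $x$ to $y$ ($\sigma_{xy}(0)=x$, $\sigma_{xy}(1)=y$, $d(\sigma_{xy}(s),\sigma_{xy}(t))=|s-t|d(x,y)$); it is conical if $d(\sigma_{xy}(t),\sigma_{x'y'}(t))\le(1-t)d(x,x')+t\,d(y,y')$ for all $x,y,x',y'$, $t\in[0,1]$. A bicombing $\sigma$ is consistent if $\sigma_{pq}([0,1])\subset\sigma_{xy}([0,1])$ whenever $p,q\in\sigma_{xy}([0,1])$. *)

(* Defs.v *)
From Stdlib Require Import Reals Lra Lia ZArith Arith.
Open Scope R_scope.

Definition is_metric {X : Type} (d : X -> X -> R) : Prop :=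
  (forall x y, 0 <= d x y) /\
  (forall x y, d x y = 0 <-> x = y) /\
  (forall x y, d x y = d y x) /\
  (forall x y z, d x z <= d x y + d y z).

(* sigma : X -> X -> R -> X ; only the values for t in [0,1] matter. *)
Definition is_bicombing {X : Type} (d : X -> X -> R) (sigma : X -> X -> R -> X) : Prop :=
  forall x y,
    sigma x y 0 = x /\ sigma x y 1 = y /\
    (forall s t, 0 <= s <= 1 -> 0 <= t <= 1 ->
       d (sigma x y s) (sigma x y t) = Rabs (s - t) * d x y).

Definition is_conical {X : Type} (d : X -> X -> R) (sigma : X -> X -> R -> X) : Prop :=
  forall x y x' y' t, 0 <= t <= 1 ->
    d (sigma x y t) (sigma x' y' t) <= (1 - t) * d x x' + t * d y y'.

Definition conical_bicombing {X : Type} (d : X -> X -> R) (sigma : X -> X -> R -> X) : Prop :=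
  is_bicombing d sigma /\ is_conical d sigma.

Definition on_geod {X : Type} (sigma : X -> X -> R -> X) (x y p : X) : Prop :=
  exists s, 0 <= s <= 1 /\ p = sigma x y s.

Definition is_consistent {X : Type} (sigma : X -> X -> R -> X) : Prop :=
  forall x y p q, on_geod sigma x y p -> on_geod sigma x y q ->
    forall r, 0 <= r <= 1 -> on_geod sigma x y (sigma p q r).

Definition cpt {X : Type} (sigma tau : X -> X -> R -> X) (n : nat) (x y : X) (i : nat) : X :=
  if Nat.eqb i 0 then x
  else if Nat.eqb i n then y
  else sigma (tau x y (INR (i - 1) / INR n)) (tau x y (INR (i + 1) / INR n)) (1/2).

Definition piece (n : nat) (t : R) : nat :=
  Nat.min (Z.to_nat (Int_part (INR n * t))) (n - 1).

(* c_sigma(n;tau)(x,y,t) = sigma(c_xy(n;i), c_xy(n;i+1), lambda) where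
   t = (1-lambda) i/n + lambda (i+1)/n, i.e. lambda = n t - i. *)
Definition c_sigma {X : Type} (sigma : X -> X -> R -> X) (n : nat) (tau : X -> X -> R -> X)
  : X -> X -> R -> X :=
  fun x y t =>
    let i := piece n t in
    sigma (cpt sigma tau n x y i) (cpt sigma tau n x y (S i)) (INR n * t - INR i).

(* Main.v *)
Require Import Defs.
From Stdlib Require Import Reals Lra Lia ZArith Arith.
Open Scope R_scope.

Lemma piece_spec (n : nat) (t : R) : (1 <= n)%nat -> 0 <= t <= 1 ->
  (piece n t <= n - 1)%nat /\ INR (piece n t) <= INR n * t <= INR (piece n t) + 1.
Proof.
  intros Hn Ht. unfold piece.
  assert (Hr0 : 0 <= INR n * t) by (apply Rmult_le_pos; [apply pos_INR | lra]).
  assert (Hr1 : INR n * t <= INR n) by (pose proof (pos_INR n); nra).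
  destruct (base_Int_part (INR n * t)) as [H1 H2].
  assert (Hz : (0 <= Int_part (INR n * t))%Z).
  { assert (H : -1 < IZR (Int_part (INR n * t))) by lra.
    apply lt_IZR in H. lia. }
  set (k := Z.to_nat (Int_part (INR n * t))) in *.
  assert (Hk : INR k = IZR (Int_part (INR n * t))).
  { unfold k. rewrite INR_IZR_INZ, Z2Nat.id; auto. }
  destruct (Nat.min_spec k (n-1)) as [[Hlt Heq]|[Hge Heq]]; rewrite Heq.
  - split; [lia|]. rewrite Hk. lra.
  - split; [lia|]. assert (INR (n-1) <= INR k) by (apply le_INR; lia).
    rewrite minus_INR in * by lia. change (INR 1) with 1 in *. lra.
Qed.

Definition gpath {X : Type} (sigma : X -> X -> R -> X) (n : nat) (p : nat -> X) (t : R) : X :=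
  sigma (p (piece n t)) (p (S (piece n t))) (INR n * t - INR (piece n t)).

Lemma chain {X : Type} (d : X -> X -> R) (p : nat -> X) n L : is_metric d ->
  (forall i, (i < n)%nat -> d (p i) (p (S i)) <= L) ->
  forall k i, (i + k <= n)%nat -> d (p i) (p (i + k)%nat) <= INR k * L.
Proof.
  intros Hm Hp. pose proof Hm as (Hpos & Hz & Hsym & Htri).
  induction k; intros i Hik.
  - rewrite Nat.add_0_r. rewrite (proj2 (Hz _ _) eq_refl). simpl; lra.
  - rewrite S_INR. replace (i + S k)%nat with (S (i + k)) by lia.
    eapply Rle_trans; [apply (Htri _ (p (i+k)%nat) _)|].
    pose proof (IHk i ltac:(lia)). pose proof (Hp (i+k)%nat ltac:(lia)). lra.
Qed.

Lemma gpath_upper {X : Type} (d : X -> X -> R) sigma n p L : is_metric d -> is_bicombing d sigma ->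
  (1 <= n)%nat -> (forall i, (i < n)%nat -> d (p i) (p (S i)) <= L) ->
  forall s t, 0 <= s -> s <= t -> t <= 1 ->
  d (gpath sigma n p s) (gpath sigma n p t) <= (t - s) * INR n * L.
Proof.
  intros Hm Hb Hn Hp s t Hs Hst Ht.
  pose proof Hm as (Hpos & Hz & Hsym & Htri).
  assert (HL : 0 <= L) by (specialize (Hp 0%nat ltac:(lia)); specialize (Hpos (p 0%nat) (p 1%nat)); lra).
  destruct (Req_dec s t) as [<-|Hne].
  - rewrite (proj2 (Hz _ _) eq_refl). lra.
  - assert (Hlt: s < t) by lra.
    destruct (piece_spec n s Hn ltac:(lra)) as [Hi1 Hi2].
    destruct (piece_spec n t Hn ltac:(lra)) as [Hj1 Hj2].
    unfold gpath.
    set (i := piece n s) in *. set (j := piece n t) in *.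
    assert (Hnpos : 0 < INR n) by (apply lt_0_INR; lia).
    destruct (lt_eq_lt_dec i j) as [[Hij|Hij]|Hij].
    + destruct (Hb (p i) (p (S i))) as [_ [H1 H2]].
      pose proof (H2 (INR n * s - INR i) 1 ltac:(lra) ltac:(lra)) as E1. rewrite H1 in E1.
      destruct (Hb (p j) (p (S j))) as [H0' [_ H2']].
      pose proof (H2' 0 (INR n * t - INR j) ltac:(lra) ltac:(lra)) as E2. rewrite H0' in E2.
      pose proof (chain d p n L Hm Hp (j - S i) (S i) ltac:(lia)) as E3.
      replace (S i + (j - S i))%nat with j in E3 by lia.
      rewrite minus_INR in E3 by lia. rewrite S_INR in E3.
      pose proof (Hp i ltac:(lia)). pose proof (Hp j ltac:(lia)).
      rewrite Rabs_left1 in E1 by lra.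
      rewrite Rabs_left1 in E2 by lra.
      eapply Rle_trans; [apply (Htri _ (p (S i)) _)|].
      eapply Rle_trans; [apply Rplus_le_compat_l; apply (Htri _ (p j) _)|].
      rewrite E1, E2.
      assert ((1 - (INR n * s - INR i)) * d (p i) (p (S i)) <= (1 - (INR n * s - INR i)) * L)
        by (apply Rmult_le_compat_l; lra).
      assert ((INR n * t - INR j) * d (p j) (p (S j)) <= (INR n * t - INR j) * L)
        by (apply Rmult_le_compat_l; lra).
      nra.
    + rewrite <- Hij in *.
      destruct (Hb (p i) (p (S i))) as [_ [_ H2]].
      rewrite H2 by lra.
      rewrite Rabs_left1 by nra.
      pose proof (Hp i ltac:(lia)).
      assert (0 <= INR n * (t - s)) by nra.
      assert (INR n * (t - s) * d (p i) (p (S i)) <= INR n * (t - s) * L)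
        by (apply Rmult_le_compat_l; lra).
      nra.
    + exfalso. assert (INR (S j) <= INR i) by (apply le_INR; lia). rewrite S_INR in H. nra.
Qed.

Lemma gpath_bicombing {X : Type} (d : X -> X -> R) sigma n p x y : is_metric d -> is_bicombing d sigma ->
  (1 <= n)%nat -> p 0%nat = x -> p n = y ->
  (forall i, (i < n)%nat -> d (p i) (p (S i)) <= d x y / INR n) ->
  gpath sigma n p 0 = x /\ gpath sigma n p 1 = y /\
  (forall s t, 0 <= s <= 1 -> 0 <= t <= 1 ->
     d (gpath sigma n p s) (gpath sigma n p t) = Rabs (s - t) * d x y).
Proof.
  intros Hm Hb Hn Hp0 Hpn Hp.
  pose proof Hm as (Hpos & Hz & Hsym & Htri).
  assert (Hnpos : 0 < INR n) by (apply lt_0_INR; lia).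
  assert (G0 : gpath sigma n p 0 = x).
  { destruct (piece_spec n 0 Hn ltac:(lra)) as [_ [H1 H2]]. unfold gpath.
    set (i := piece n 0) in *.
    assert (Hi0 : i = 0%nat).
    { destruct (Nat.eq_dec i 0) as [e|ne]; [exact e|].
      exfalso; assert (INR 1 <= INR i) by (apply le_INR; lia). simpl in *; lra. }
    rewrite Hi0. replace (INR n * 0 - INR 0) with 0 by (simpl; ring).
    destruct (Hb (p 0%nat) (p 1%nat)) as [-> _]. exact Hp0. }
  assert (G1 : gpath sigma n p 1 = y).
  { destruct (piece_spec n 1 Hn ltac:(lra)) as [H0 [H1 H2]]. unfold gpath.
    set (i := piece n 1) in *.
    assert (Hi : i = (n - 1)%nat).
    { destruct (Nat.eq_dec i (n-1)) as [e|ne]; [exact e|].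
      exfalso; assert (INR (S i) <= INR (n - 1)) by (apply le_INR; lia).
      rewrite S_INR, minus_INR in H by lia. change (INR 1) with 1 in H. lra. }
    rewrite Hi. replace (S (n-1)) with n by lia.
    replace (INR n * 1 - INR (n-1)) with 1 by (rewrite minus_INR by lia; simpl; ring).
    destruct (Hb (p (n-1)%nat) (p n)) as [_ [-> _]]. exact Hpn. }
  assert (Key : forall s t, 0 <= s -> s <= t -> t <= 1 ->
            d (gpath sigma n p s) (gpath sigma n p t) = (t - s) * d x y).
  { intros s t Hs Hst Ht.
    assert (U : forall a b, 0 <= a -> a <= b -> b <= 1 ->
              d (gpath sigma n p a) (gpath sigma n p b) <= (b - a) * d x y).
    { intros a b Ha Hab Hb1.
      pose proof (gpath_upper d sigma n p (d x y / INR n) Hm Hb Hn Hp a b Ha Hab Hb1) as U.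
      replace ((b - a) * INR n * (d x y / INR n)) with ((b - a) * d x y) in U
        by (field; apply Rgt_not_eq; exact Hnpos).
      exact U. }
    apply Rle_antisym; [apply U; lra|].
    pose proof (U 0 s ltac:(lra) ltac:(lra) ltac:(lra)) as U1.
    pose proof (U t 1 ltac:(lra) ltac:(lra) ltac:(lra)) as U2.
    rewrite G0 in U1. rewrite G1 in U2.
    pose proof (Htri x (gpath sigma n p s) y).
    pose proof (Htri (gpath sigma n p s) (gpath sigma n p t) y).
    lra. }
  split; [exact G0|split; [exact G1|]].
  intros s t Hs Ht.
  destruct (Rle_dec s t).
  - rewrite Rabs_left1 by lra. rewrite Key by lra. ring.
  - rewrite Hsym, Rabs_right by lra. rewrite Key by lra. ring.
Qed.

Definition alpha (n i : nat) : R :=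
  if Nat.eqb i 0 then 0 else if Nat.eqb i n then 1 else INR (i - 1) / INR n.
Definition beta (n i : nat) : R :=
  if Nat.eqb i 0 then 0 else if Nat.eqb i n then 1 else INR (i + 1) / INR n.

Lemma sigma_xx {X : Type} (d : X -> X -> R) sigma z r : is_metric d -> is_bicombing d sigma ->
  0 <= r <= 1 -> sigma z z r = z.
Proof.
  intros Hm Hb Hr. pose proof Hm as (Hpos & Hz & Hsym & Htri).
  destruct (Hb z z) as [H0 [_ H2]].
  specialize (H2 r 0 Hr ltac:(lra)). rewrite H0 in H2.
  rewrite (proj2 (Hz z z) eq_refl) in H2. rewrite Rmult_0_r in H2.
  apply Hz; exact H2.
Qed.

Lemma cpt_repr {X : Type} (d : X -> X -> R) sigma tau n x y i : is_metric d ->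
  is_bicombing d sigma -> is_bicombing d tau ->
  cpt sigma tau n x y i = sigma (tau x y (alpha n i)) (tau x y (beta n i)) (1/2).
Proof.
  intros Hm Hs Ht. unfold cpt, alpha, beta.
  destruct (Nat.eqb i 0).
  - destruct (Ht x y) as [-> _]. symmetry; apply (sigma_xx d); auto; lra.
  - destruct (Nat.eqb i n).
    + destruct (Ht x y) as [_ [-> _]]. symmetry; apply (sigma_xx d); auto; lra.
    + reflexivity.
Qed.

Lemma ab_range n i : (1 <= n)%nat -> (i <= n)%nat ->
  0 <= alpha n i <= 1 /\ 0 <= beta n i <= 1 /\ alpha n i <= beta n i /\
  alpha n i + beta n i = 2 * (INR i / INR n).
Proof.
  intros Hn Hi.
  assert (Hnpos : 0 < INR n) by (apply lt_0_INR; lia).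
  unfold alpha, beta.
  destruct (Nat.eqb_spec i 0) as [->|H0].
  - simpl INR. unfold Rdiv. rewrite Rmult_0_l. lra.
  - destruct (Nat.eqb_spec i n) as [->|Hn'].
    + unfold Rdiv. rewrite Rinv_r by lra. lra.
    + rewrite minus_INR, plus_INR by lia. change (INR 1) with 1.
      assert (1 <= INR i) by (apply (le_INR 1); lia).
      assert (INR (i + 1) <= INR n) by (apply le_INR; lia).
      rewrite plus_INR in H1. change (INR 1) with 1 in H1.
      unfold Rdiv. set (h := / INR n).
      assert (Hh : INR n * h = 1) by (unfold h; field; lra).
      assert (0 < h) by (unfold h; apply Rinv_0_lt_compat; lra).
      nra.
Qed.

Lemma ab_step n i : (1 <= n)%nat -> (i < n)%nat ->
  Rabs (alpha n i - alpha n (S i)) + Rabs (beta n i - beta n (S i)) <= 2 / INR n.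
Proof.
  intros Hn Hi.
  destruct (Nat.eq_dec n 1) as [->|Hn1].
  { assert (i = 0%nat) by lia. subst. unfold alpha, beta. simpl.
    rewrite Rabs_left by lra. lra. }
  assert (Hnpos : 0 < INR n) by (apply lt_0_INR; lia).
  destruct (Nat.eq_dec i 0) as [->|Hi0].
  { unfold alpha, beta.
    rewrite (proj2 (Nat.eqb_neq 1 n) ltac:(lia)). simpl Nat.eqb.
    simpl INR. unfold Rdiv. set (h := / INR n).
    assert (0 < h) by (unfold h; apply Rinv_0_lt_compat; lra).
    assert (A1 : Rabs (0 - 0 * h) <= 0) by (apply Rabs_le; lra).
    assert (A2 : Rabs (0 - (1 + 1) * h) <= 2 * h) by (apply Rabs_le; lra).
    lra. }
  destruct (Nat.eq_dec (S i) n) as [Hsi|Hsi].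
  { subst n. unfold alpha, beta.
    rewrite (proj2 (Nat.eqb_neq i 0) Hi0), (proj2 (Nat.eqb_neq i (S i)) ltac:(lia)).
    rewrite (proj2 (Nat.eqb_neq (S i) 0) ltac:(lia)), Nat.eqb_refl.
    rewrite minus_INR, plus_INR by lia. change (INR 1) with 1.
    unfold Rdiv. set (h := / INR (S i)).
    assert (Hh : INR (S i) * h = 1) by (unfold h; field; lra).
    rewrite S_INR in Hh.
    assert (0 < h) by (unfold h; apply Rinv_0_lt_compat; lra).
    assert (A1 : Rabs ((INR i - 1) * h - 1) <= 2 * h) by (apply Rabs_le; nra).
    assert (A2 : Rabs ((INR i + 1) * h - 1) <= 0) by (apply Rabs_le; nra).
    lra. }
  unfold alpha, beta.
  rewrite (proj2 (Nat.eqb_neq i 0) Hi0), (proj2 (Nat.eqb_neq i n) ltac:(lia)).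
  rewrite (proj2 (Nat.eqb_neq (S i) 0) ltac:(lia)), (proj2 (Nat.eqb_neq (S i) n) Hsi).
  rewrite !minus_INR, !plus_INR, !S_INR by lia. change (INR 0) with 0.
  replace (0 + 1) with 1 by ring.
  unfold Rdiv. set (h := / INR n).
  assert (0 < h) by (unfold h; apply Rinv_0_lt_compat; lra).
  assert (A1 : Rabs ((INR i - 1) * h - (INR i + 1 - 1) * h) <= h) by (apply Rabs_le; nra).
  assert (A2 : Rabs ((INR i + 1) * h - (INR i + 1 + 1) * h) <= h) by (apply Rabs_le; nra).
  lra.
Qed.

Lemma cpt_step {X : Type} (d : X -> X -> R) sigma tau n x y i : is_metric d ->
  conical_bicombing d sigma -> conical_bicombing d tau -> (1 <= n)%nat -> (i < n)%nat ->
  d (cpt sigma tau n x y i) (cpt sigma tau n x y (S i)) <= d x y / INR n.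
Proof.
  intros Hm [Hsb Hsc] [Htb Htc] Hn Hi.
  pose proof Hm as (Hpos & Hz & Hsym & Htri).
  assert (Hnpos : 0 < INR n) by (apply lt_0_INR; lia).
  rewrite !(cpt_repr d sigma tau n x y) by auto.
  eapply Rle_trans; [apply Hsc; lra|].
  destruct (ab_range n i Hn ltac:(lia)) as (A1 & B1 & _ & _).
  destruct (ab_range n (S i) Hn ltac:(lia)) as (A2 & B2 & _ & _).
  destruct (Htb x y) as (_ & _ & Hd).
  rewrite !Hd by lra.
  pose proof (ab_step n i Hn Hi) as S.
  pose proof (Hpos x y).
  unfold Rdiv in *. set (h := / INR n) in *.
  nra.
Qed.

Lemma cpt_conical {X : Type} (d : X -> X -> R) sigma tau n x y x' y' i : is_metric d ->
  conical_bicombing d sigma -> conical_bicombing d tau -> (1 <= n)%nat -> (i <= n)%nat ->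
  d (cpt sigma tau n x y i) (cpt sigma tau n x' y' i) <=
  (1 - INR i / INR n) * d x x' + INR i / INR n * d y y'.
Proof.
  intros Hm [Hsb Hsc] [Htb Htc] Hn Hi.
  rewrite !(cpt_repr d sigma tau n _ _) by auto.
  eapply Rle_trans; [apply Hsc; lra|].
  destruct (ab_range n i Hn Hi) as (A1 & B1 & _ & Hsum).
  pose proof (Htc x y x' y' (alpha n i) A1).
  pose proof (Htc x y x' y' (beta n i) B1).
  set (q := INR i / INR n) in *.
  assert (Hb : beta n i = 2 * q - alpha n i) by lra.
  rewrite Hb in *. nra.
Qed.

Lemma consist_comb {X : Type} (d : X -> X -> R) sigma x y a b lam : is_metric d ->
  is_bicombing d sigma -> is_consistent sigma -> 0 <= a -> a <= b -> b <= 1 -> 0 <= lam <= 1 ->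
  sigma (sigma x y a) (sigma x y b) lam = sigma x y ((1 - lam) * a + lam * b).
Proof.
  intros Hm Hbi Hcons Ha Hab Hb Hlam.
  pose proof Hm as (Hpos & Hz & Hsym & Htri).
  destruct (Hcons x y (sigma x y a) (sigma x y b)
             (ex_intro _ a (conj (conj Ha (Rle_trans _ _ _ Hab Hb)) eq_refl))
             (ex_intro _ b (conj (conj (Rle_trans _ _ _ Ha Hab) Hb) eq_refl)) lam Hlam)
    as [s [Hs HP]].
  assert (Hu: 0 <= (1-lam)*a + lam*b <= 1) by nra.
  destruct (Hbi x y) as [Hx0 [Hx1 Hd]].
  rewrite HP.
  destruct (Req_dec (d x y) 0) as [HD|HD].
  - apply Hz. rewrite Hd by lra. rewrite HD; ring.
  - assert (HDp : 0 < d x y) by (pose proof (Hpos x y); lra).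
    destruct (Hbi (sigma x y a) (sigma x y b)) as [Q0 [Q1 Qd]].
    pose proof (Qd lam 0 Hlam ltac:(lra)) as E1. rewrite Q0, HP in E1.
    pose proof (Qd lam 1 Hlam ltac:(lra)) as E2. rewrite Q1, HP in E2.
    rewrite !Hd in E1 by lra. rewrite !Hd in E2 by lra.
    rewrite (Rabs_right (lam - 0)) in E1 by lra.
    rewrite (Rabs_left1 (lam - 1)) in E2 by lra.
    rewrite (Rabs_left1 (a - b)) in E1, E2 by lra.
    assert (F1 : Rabs (s - a) = lam * (- (a - b))).
    { apply (Rmult_eq_reg_r (d x y)); [|lra]. rewrite E1; ring. }
    assert (F2 : Rabs (s - b) = - (lam - 1) * (- (a - b))).
    { apply (Rmult_eq_reg_r (d x y)); [|lra]. rewrite E2; ring. }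
    assert (Hsu : s = (1 - lam) * a + lam * b).
    { destruct (Rcase_abs (s - a)) as [r1|r1];
      [rewrite Rabs_left in F1 by lra | rewrite Rabs_right in F1 by lra];
      (destruct (Rcase_abs (s - b)) as [r2|r2];
      [rewrite Rabs_left in F2 by lra | rewrite Rabs_right in F2 by lra]); nra. }
    rewrite Hsu; reflexivity.
Qed.

Lemma c_eq {X : Type} (sigma tau : X -> X -> R -> X) n x y t :
  c_sigma sigma n tau x y t = gpath sigma n (cpt sigma tau n x y) t.
Proof. reflexivity. Qed.

Theorem lemma5p1 (X : Type) (d : X -> X -> R) (sigma tau : X -> X -> R -> X) (n : nat) :
  is_metric d ->
  conical_bicombing d sigma ->
  conical_bicombing d tau ->
  (1 <= n)%nat ->
  conical_bicombing d (c_sigma sigma n tau) /\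
  (is_consistent sigma ->
     forall x y t, 0 <= t <= 1 -> c_sigma sigma n sigma x y t = sigma x y t).
Proof.
  intros Hm Hs Ht Hn.
  assert (Hnpos : 0 < INR n) by (apply lt_0_INR; lia).
  assert (Hpn : forall (tau' : X -> X -> R -> X) x y, cpt sigma tau' n x y n = y).
  { intros. unfold cpt. rewrite (proj2 (Nat.eqb_neq n 0) ltac:(lia)), Nat.eqb_refl. reflexivity. }
  split; [split|].
  - intros x y.
    destruct (gpath_bicombing d sigma n (cpt sigma tau n x y) x y Hm (proj1 Hs) Hn
                eq_refl (Hpn tau x y)
                (fun i Hi => cpt_step d sigma tau n x y i Hm Hs Ht Hn Hi)) as [G0 [G1 Gd]].
    split; [exact G0|split; [exact G1|exact Gd]].
  - intros x y x' y' t Htt. rewrite !c_eq. unfold gpath.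
    destruct (piece_spec n t Hn Htt) as [Hi1 Hi2].
    set (i := piece n t) in *.
    set (lam := INR n * t - INR i).
    eapply Rle_trans; [apply (proj2 Hs); unfold lam; lra|].
    pose proof (cpt_conical d sigma tau n x y x' y' i Hm Hs Ht Hn ltac:(lia)) as A.
    pose proof (cpt_conical d sigma tau n x y x' y' (S i) Hm Hs Ht Hn ltac:(lia)) as B.
    assert (Hl : 0 <= lam <= 1) by (unfold lam; lra).
    pose proof (Rmult_le_compat_l (1 - lam) _ _ ltac:(lra) A) as A'.
    pose proof (Rmult_le_compat_l lam _ _ ltac:(lra) B) as B'.
    eapply Rle_trans; [apply Rplus_le_compat; [exact A'|exact B']|].
    rewrite S_INR in *. unfold Rdiv. set (h := / INR n).
    assert (Hteq : t = (INR i + lam) * h) by (unfold lam, h; field; lra).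
    clearbody lam h. rewrite Hteq. apply Req_le; ring.
  - intros Hc x y t Htt.
    assert (Hcp : forall i, (i <= n)%nat -> cpt sigma sigma n x y i = sigma x y (INR i / INR n)).
    { intros i Hi. rewrite (cpt_repr d sigma sigma) by (auto; apply Hs).
      destruct (ab_range n i Hn Hi) as (A1 & B1 & AB & Hsum).
      rewrite (consist_comb d) by (auto; try apply Hs; lra).
      f_equal. lra. }
    rewrite c_eq. unfold gpath.
    destruct (piece_spec n t Hn Htt) as [Hi1 Hi2].
    set (i := piece n t) in *.
    rewrite !Hcp by lia.
    assert (INR i / INR n <= INR (S i) / INR n).
    { unfold Rdiv. apply Rmult_le_compat_r; [left; apply Rinv_0_lt_compat; lra|].
      rewrite S_INR; lra. }
    assert (0 <= INR i / INR n) by (unfold Rdiv; apply Rmult_le_pos; [apply pos_INR|left; apply Rinv_0_lt_compat; lra]).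
    assert (INR (S i) / INR n <= 1).
    { assert (INR (S i) <= INR n) by (apply le_INR; lia).
      unfold Rdiv. rewrite <- (Rinv_r (INR n)) by lra.
      apply Rmult_le_compat_r; [left; apply Rinv_0_lt_compat; lra|lra]. }
    rewrite (consist_comb d) by (auto; try apply Hs; lra).
    f_equal. rewrite S_INR. field. lra.
Qed.
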